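(* Let $\mathfrak g$ be of type $A_n$, $b\in\mathcal B(\infty)$, and let $i\ne j$ in $I$. Let $m=m_i(b)$ (so $1\le m\le n+1-i$) and $m^\ast=m_j^\ast(b)$ (so $1\le m^\ast\le j$); below $\Sigma_t$ refers to index $i$ and $\Sigma^\ast_s$ to index $j$. If $i>j$, then $\Sigma^\ast_s(\widetilde f_i(b))=\Sigma^\ast_s(b)$ for $1\le s\le j$ and $\Sigma_t(\widetilde f_j^\ast(b))=\Sigma_t(b)$ for $1\le t\le n+1-i$. If $i<j$, then for $1\le s\le j$, $\Sigma^\ast_s(\widetilde f_i(b))=\Sigma^\ast_s(b)-1$ if $m=j-i$ and $s=m$; $=\Sigma^\ast_s(b)+1$ if $m=j-i+1$ and $s=m$; $=\Sigma^\ast_s(b)$ otherwise; and for $1\le t\le n+1-i$, $\Sigma_t(\widetilde f_j^\ast(b))=\Sigma_t(b)-1$ if $m^\ast=j-i$ and $t=m^\ast$; $=\Sigma_t(b)+1$ if $m^\ast=j-i+1$ and $t=m^\ast$; $=\Sigma_t(b)$ otherwise.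
   Context: $I=\{1,\dots,n\}$. $\mathcal I=\{(s,t)\in\mathbb Z_{>0}\times I:s+t\le n+1\}$; $\mathcal B(\infty)$ is the set of $b=(b_{s,t})_{(s,t)\in\mathcal I}\in\mathbb Z_{\ge0}^{\mathcal I}$ with $b_{1,k}\ge b_{2,k-1}\ge\dots\ge b_{k,1}$ for $1\le k\le n$. Convention: $b_{s,t}=0$, $\mathbf e_{s,t}=0$ for $(s,t)\notin\mathcal I$. $\partial_{s,t}(b)=b_{s,t}-b_{s,t+1}-b_{s+1,t-1}+b_{s+1,t}$, $\partial^\ast_{s,t}(b)=b_{s-1,t}-b_{s-1,t+1}-b_{s,t-1}+b_{s,t}$. For an index $i$ and $1\le k\le n+1-i$: $\Sigma_k(b)=\sum_{s=k}^{n+1-i}\partial_{s,i}(b)$, $m_i(b)$ the smallest $k$ maximizing $\Sigma_k(b)$, $\widetilde f_i(b)=b+\mathbf e_{m_i(b),i}$. For an index $j$ and $1\le k\le j$: $\Sigma^\ast_k(b)=\sum_{t=1}^k\partial^\ast_{t,j+1-t}(b)$, $m_j^\ast(b)$ the smallest $k$ maximizing $\Sigma^\ast_k(b)$, $\widetilde f_j^\ast(b)=b+\sum_{t=1}^{m_j^\ast(b)}(\mathbf e_{t,j+1-t}-\mathbf e_{t-1,j+1-t})$. *)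

(* Defs.v *)
From mathcomp Require Import all_boot all_order all_algebra.
Set Implicit Arguments. Unset Strict Implicit. Unset Printing Implicit Defensive.
Import Order.TTheory GRing.Theory Num.Theory.
Local Open Scope ring_scope.

Definition arr := nat -> nat -> int.

Definition inI (n s t : nat) : bool :=
  [&& (0 < s)%N, (0 < t)%N, (t <= n)%N & (s + t <= n.+1)%N].

Definition bv (n : nat) (b : arr) (s t : nat) : int :=
  if inI n s t then b s t else 0.

Definition e (n s t : nat) : arr :=
  fun s' t' => if inI n s t && (s' == s) && (t' == t) then 1 else 0.

Definition Binf (n : nat) (b : arr) : Prop :=
  [/\ forall s t, ~~ inI n s t -> b s t = 0,
      forall s t, 0 <= b s t
    & forall k s, (1 <= k <= n)%N -> (1 <= s)%N -> (s < k)%N ->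
        b s.+1 (k - s)%N <= b s (k.+1 - s)%N].

Definition dd (n : nat) (b : arr) (s t : nat) : int :=
  bv n b s t - bv n b s t.+1 - bv n b s.+1 t.-1 + bv n b s.+1 t.

Definition ddS (n : nat) (b : arr) (s t : nat) : int :=
  bv n b s.-1 t - bv n b s.-1 t.+1 - bv n b s t.-1 + bv n b s t.

Definition Sigma (n i : nat) (b : arr) (k : nat) : int :=
  \sum_(k <= s < (n.+2 - i)%N) dd n b s i.

Definition SigmaS (n j : nat) (b : arr) (k : nat) : int :=
  \sum_(1 <= t < k.+1) ddS n b t (j.+1 - t)%N.

(* smallest k in [1, N] maximizing f (scan left to right, replace the
   current candidate only on strict improvement) *)
Definition first_argmax (f : nat -> int) (N : nat) : nat :=
  foldl (fun acc k => if f acc < f k then k else acc) 1%N (iota 2 N.-1).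

Definition m_ (n i : nat) (b : arr) : nat :=
  first_argmax (Sigma n i b) (n.+1 - i)%N.

Definition mS_ (n j : nat) (b : arr) : nat :=
  first_argmax (SigmaS n j b) j.

Definition f_ (n i : nat) (b : arr) : arr :=
  fun s t => b s t + e n (m_ n i b) i s t.

Definition fS_ (n j : nat) (b : arr) : arr :=
  fun s t => b s t +
    \sum_(1 <= u < (mS_ n j b).+1)
       (e n u (j.+1 - u)%N s t - e n u.-1 (j.+1 - u)%N s t).

(* Main.v *)
Require Import Defs.
From mathcomp Require Import all_boot all_order all_algebra.
From mathcomp Require Import zify ring.
Import Order.TTheory GRing.Theory Num.Theory.
Local Open Scope ring_scope.


Lemma bv_add n (x y : arr) s t :
  bv n (fun a c => x a c + y a c) s t = bv n x s t + bv n y s t.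
Proof. by rewrite /bv; case: ifP; rewrite ?addr0. Qed.

Lemma bv_ext n (x y : arr) s t : (forall a c, x a c = y a c) -> bv n x s t = bv n y s t.
Proof. by move=> H; rewrite /bv H. Qed.

Lemma Sigma_add n i (x y : arr) k :
  Sigma n i (fun a c => x a c + y a c) k = Sigma n i x k + Sigma n i y k.
Proof. rewrite /Sigma -big_split; apply: eq_bigr => s _; rewrite /dd !bv_add /=; ring. Qed.

Lemma SigmaS_add n j (x y : arr) k :
  SigmaS n j (fun a c => x a c + y a c) k = SigmaS n j x k + SigmaS n j y k.
Proof. rewrite /SigmaS -big_split; apply: eq_bigr => s _; rewrite /ddS !bv_add /=; ring. Qed.

Lemma Sigma_ext n i (x y : arr) k : (forall a c, x a c = y a c) -> Sigma n i x k = Sigma n i y k.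
Proof. by move=> H; apply: eq_bigr => s _; rewrite /dd !(@bv_ext n x y _ _ H). Qed.

Lemma SigmaS_cf n j x s : (s <= j)%N ->
  SigmaS n j x s = bv n x s (j.+1 - s) - bv n x s (j - s).
Proof.
elim: s => [|s IH] Hs.
  by rewrite /SigmaS big_geq // /bv /inI /= subrr.
rewrite /SigmaS big_nat_recr //= -/(SigmaS n j x s) IH; last by lia.
rewrite /ddS /= subSS subSn; last by lia.
rewrite subnS /=. ring.
Qed.

Lemma sum_pt a b p (F : nat -> int) : (forall u, u != p -> F u = 0) ->
  \sum_(a <= u < b) F u = if (a <= p < b)%N then F p else 0.
Proof.
move=> H; case: ifP => Hp.
  rewrite (big_rem p) /=; last by rewrite mem_index_iota.
  rewrite big1_seq ?addr0 // => u /andP[_ Hu]; apply: H.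
  by move: Hu; apply: contraTneq => ->; rewrite mem_rem_uniq ?iota_uniq //= inE eqxx.
rewrite big1_seq // => u /andP[_ Hu]; apply: H.
by move: Hu; apply: contraTneq => ->; rewrite mem_index_iota Hp.
Qed.

Lemma foldl_inv (P : nat -> Prop) (g : nat -> nat -> nat) (s : seq nat) acc :
  (forall a k, P a -> P k -> P (g a k)) -> P acc -> (forall k, k \in s -> P k) ->
  P (foldl g acc s).
Proof.
move=> Hg; elim: s acc => [|x s IH] acc Hacc Hs //=.
apply: IH; first by apply: Hg => //; apply: Hs; rewrite inE eqxx.
by move=> k Hk; apply: Hs; rewrite inE Hk orbT.
Qed.

Lemma first_argmax_range f N : (1 <= first_argmax f N <= maxn 1 N)%N.
Proof.
rewrite /first_argmax.
apply: (@foldl_inv (fun k => (1 <= k <= maxn 1 N)%N)).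
- by move=> a k Ha Hk; case: ifP.
- lia.
- by move=> k; rewrite mem_iota; lia.
Qed.


Lemma bv_e n p q x y : bv n (e n p q) x y = e n p q x y.
Proof.
rewrite /bv /e; case: ifP => // H.
case: ifP => // /andP[/andP[Hpq /eqP Ex] /eqP Ey].
by move: H; rewrite Ex Ey Hpq.
Qed.

Lemma partA n i j b s : (1 <= i <= n)%N -> (1 <= j <= n)%N -> i <> j -> (1 <= s <= j)%N ->
  SigmaS n j (f_ n i b) s =
   if (i < j)%N then
          if (m_ n i b == (j - i)%N) && (s == m_ n i b) then SigmaS n j b s - 1
          else if (m_ n i b == (j - i).+1) && (s == m_ n i b) then SigmaS n j b s + 1
          else SigmaS n j b s
   else SigmaS n j b s.
Proof.
move=> Hi Hj Hij Hs.
rewrite /f_ SigmaS_add (SigmaS_cf _ _ (e _ _ _)); last by lia.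
rewrite !bv_e /e /inI.
move: (m_ n i b) => m; move: (SigmaS n j b s) => X.
repeat (case: ifP => ?); lia.
Qed.


Ltac simp_if := match goal with |- context [if ?c then _ else _] =>
  let H := fresh "H" in
  first [ have H : c = true by lia | have H : c = false by lia | case: (boolP c) => H ];
  rewrite ?H /= end.
Ltac crush := repeat simp_if; lia.

Definition Dc n j M : arr := fun s t =>
  (if inI n s t && (s <= M)%N && (s + t == j.+1)%N then 1 else 0) -
  (if inI n s t && (s < M)%N && (s + t == j)%N then 1 else 0).

Lemma Dsum_Dc n j M s t :
  \sum_(1 <= u < M.+1) (e n u (j.+1 - u) s t - e n u.-1 (j.+1 - u) s t) = Dc n j M s t.
Proof.
rewrite sumrB (@sum_pt _ _ s); last first.
  by move=> u Hu; rewrite /e; case: ifP => //; lia.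
rewrite (@sum_pt _ _ s.+1); last first.
  by move=> u Hu; rewrite /e /inI; case: ifP => //; lia.
rewrite /Dc /e /inI /=; crush.
Qed.

Lemma bv_Dc n j M s t : bv n (Dc n j M) s t = Dc n j M s t.
Proof. rewrite /bv /Dc; case: ifP => // ->; by rewrite /= ?subrr. Qed.

Definition G (i j M t : nat) : int :=
  if (i < j)%N then
    (if (M == (j - i)%N) && (t == M) then -1
     else if (M == (j - i).+1) && (t == M) then 1 else 0)
  else 0.

Lemma Dc_ti n j M t i : (1 <= i <= n)%N -> (1 <= t)%N -> (t + i <= n.+1)%N ->
  Dc n j M t i = (if ((t <= M) && (t + i == j.+1))%N then 1 else 0)
               - (if ((t < M) && (t + i == j))%N then 1 else 0).
Proof. by move=> *; rewrite /Dc (_ : inI n t i = true) //; rewrite /inI; lia. Qed.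

Lemma Dc_ti1 n j M t i : (1 <= i)%N -> (1 <= t)%N -> (j <= n)%N ->
  Dc n j M t i.+1 = (if ((t <= M) && (t + i == j))%N then 1 else 0)
               - (if ((t < M) && (t + i.+1 == j))%N then 1 else 0).
Proof.
move=> *; rewrite /Dc; case E: (inI n t i.+1); first by rewrite /= addnS eqSS.
move: E; rewrite /inI => E.
rewrite (_ : (t + i == j)%N = false); last by lia.
by rewrite (_ : (t + i.+1 == j)%N = false) ?andbF //; lia.
Qed.

Lemma Dc_t1i n j M t i : (1 <= i <= n)%N -> (1 <= t)%N -> (t + i <= n.+1)%N ->
  Dc n j M t.+1 i.-1 = (if ((1 < i)%N && (t.+1 <= M) && (t + i == j.+1))%N then 1 else 0)
               - (if ((1 < i)%N && (t.+1 < M) && (t + i == j))%N then 1 else 0).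
Proof.
move=> *; rewrite /Dc; case E: (inI n t.+1 i.-1).
  move: E; rewrite /inI => E.
  rewrite (_ : (1 < i)%N = true); last by lia.
  by rewrite (_ : (t.+1 + i.-1 = t + i)%N); last by lia.
move: E; rewrite /inI => E.
rewrite (_ : (1 < i)%N = false) //; lia.
Qed.

Lemma Dc_t1i' n j M t i : (1 <= i <= n)%N -> (1 <= t)%N -> (j <= n)%N ->
  Dc n j M t.+1 i = (if ((t.+1 <= M) && (t + i == j))%N then 1 else 0)
               - (if ((t.+1 < M) && (t + i.+1 == j))%N then 1 else 0).
Proof.
move=> *; rewrite /Dc; case E: (inI n t.+1 i); move: E; rewrite /inI => E.
  by rewrite addSn (_ : (t + i.+1 = (t + i).+1)%N) ?addnS.
rewrite (_ : (t + i == j)%N = false); last by lia.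
by rewrite (_ : (t + i.+1 == j)%N = false) ?andbF //; lia.
Qed.

Lemma dd_Dc n i j M t : (1 <= i <= n)%N -> (1 <= j <= n)%N -> i <> j -> (1 <= M <= j)%N ->
  (1 <= t)%N -> (t < n.+2 - i)%N ->
  dd n (Dc n j M) t i = G i j M t - G i j M t.+1.
Proof.
move=> Hi Hj Hij HM Ht1 Ht2; rewrite /dd !bv_Dc.
rewrite Dc_ti; try lia. rewrite Dc_ti1; try lia. rewrite Dc_t1i; try lia. rewrite Dc_t1i'; try lia.
rewrite /G.
have : (t + i + 1 = j)%N \/ (t + i = j)%N \/ (t + i = j.+1)%N \/ ((t + i + 1 < j) \/ (t + i > j.+1))%N by lia.
case=> [Ht|[Ht|[Ht|Ht]]].
- crush.
- crush.
- crush.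
- crush.
Qed.


Lemma Sigma_Dc n i j M t : (1 <= i <= n)%N -> (1 <= j <= n)%N -> i <> j -> (1 <= M <= j)%N ->
  (1 <= t <= n.+1 - i)%N -> Sigma n i (Dc n j M) t = G i j M t.
Proof.
move=> Hi Hj Hij HM Ht.
suff H: forall k t, (t + k = n.+2 - i)%N -> (1 <= t)%N -> Sigma n i (Dc n j M) t = G i j M t.
  by apply: (H (n.+2 - i - t)%N); lia.
clear Ht; elim=> [|k IH] {}t Hk Ht1.
  rewrite /Sigma big_geq; last by lia.
  by rewrite /G; crush.
rewrite /Sigma big_ltn; last by lia.
rewrite -/(Sigma n i (Dc n j M) t.+1) IH; try lia.
rewrite dd_Dc; try lia.
Qed.

Theorem lemma6p10 (n i j : nat) (b : arr) :
  (1 <= i <= n)%N -> (1 <= j <= n)%N -> i <> j -> Binf n b ->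
  let m := m_ n i b in
  let mS := mS_ n j b in
  ((j < i)%N ->
     (forall s, (1 <= s <= j)%N -> SigmaS n j (f_ n i b) s = SigmaS n j b s) /\
     (forall t, (1 <= t <= n.+1 - i)%N -> Sigma n i (fS_ n j b) t = Sigma n i b t)) /\
  ((i < j)%N ->
     (forall s, (1 <= s <= j)%N ->
        SigmaS n j (f_ n i b) s =
          if (m == (j - i)%N) && (s == m) then SigmaS n j b s - 1
          else if (m == (j - i).+1) && (s == m) then SigmaS n j b s + 1
          else SigmaS n j b s) /\
     (forall t, (1 <= t <= n.+1 - i)%N ->
        Sigma n i (fS_ n j b) t =
          if (mS == (j - i)%N) && (t == mS) then Sigma n i b t - 1
          else if (mS == (j - i).+1) && (t == mS) then Sigma n i b t + 1
          else Sigma n i b t)).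
Proof.
move=> Hi Hj Hij _ m mS; rewrite {}/m {}/mS.
have HM : (1 <= mS_ n j b <= j)%N.
  by move: (first_argmax_range (SigmaS n j b) j); rewrite /mS_; lia.
have HS : forall t, (1 <= t <= n.+1 - i)%N ->
    Sigma n i (fS_ n j b) t = Sigma n i b t + G i j (mS_ n j b) t.
  move=> t Ht; rewrite /fS_ Sigma_add.
  rewrite -(@Sigma_Dc n i j (mS_ n j b) t) //; congr (_ + _).
  by apply: Sigma_ext => a c /=; exact: Dsum_Dc.
split=> Hlt; split.
- move=> s Hs; rewrite partA //; have -> : (i < j)%N = false by lia. by [].
- move=> t Ht; rewrite HS // /G; have -> : (i < j)%N = false by lia. by rewrite addr0.
- move=> s Hs; rewrite partA //; have -> : (i < j)%N = true by lia. by [].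
- move=> t Ht; rewrite HS // /G; have -> : (i < j)%N = true by lia.
  move: (Sigma n i b t) (mS_ n j b) HM => X M HM'.
  crush.
Qed.
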